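(* Under the standing setup and the algorithm/assumptions described in the context, there exists a constant $\chi>0$ such that for every pair of integers $1\le\underline{k}\le\overline{k}$, $$\min_{\underline{k}\le n\le\overline{k}}\mathcal{M}_{\bar\gamma}^{F_n,\phi}(x_n)\ \le\ \sqrt{\frac{\chi}{\sum_{n=\underline{k}}^{\overline{k}}\mu_n}}.$$
   Context: Standing setup: $\mathcal{X},\mathcal{Z}$ finite-dimensional real Hilbert spaces; $\phi:\mathcal{X}\to\mathbb{R}\cup\{+\infty\}$ proper lower semicontinuous convex; $h:\mathcal{X}\to\mathbb{R}$ differentiable with $\nabla h$ Lipschitz on $\mathrm{dom}\,\phi$; $\mathfrak{S}:\mathcal{X}\to\mathcal{Z}$ continuously differentiable; $g:\mathcal{Z}\to\mathbb{R}$ Lipschitz with constant $L_g>0$ and $\eta$-weakly convex ($g+\frac\eta2\|\cdot\|^2$ convex, $\eta>0$); $F:=h+g\circ\mathfrak{S}$ and $\mathrm{argmin}_x(F+\phi)\ne\emptyset$. Notation: $\mathrm{prox}_{\gamma\phi}(\bar x)=\mathrm{argmin}_x(\phi(x)+\frac1{2\gamma}\|x-\bar x\|^2)$; Moreau envelope ${}^{\mu}g(\bar z)=\min_z(g(z)+\frac1{2\mu}\|z-\bar z\|^2)$ for $\mu\in(0,\eta^{-1})$ (continuously differentiable). $F_n:=h+{}^{\mu_n}g\circ\mathfrak{S}$, and for $\gamma>0$, $\mathcal{M}_\gamma^{F_n,\phi}(x)=\|(x-\mathrm{prox}_{\gamma\phi}(x-\gamma\nabla F_n(x)))/\gamma\|$.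 Algorithm and assumptions: fix $x_1\in\mathrm{dom}\,\phi$ and $c\in(0,1)$. (a) $(\mu_n)\subset(0,\frac{1}{2\eta}]$ with $\mu_n\to0$, $\sum_n\mu_n=+\infty$, and there is $M\ge1$ with $M^{-1}\le\mu_{n+1}/\mu_n\le1$ for all $n$. (b) Each $\nabla F_n$ is Lipschitz continuous on $\mathrm{dom}\,\phi$ with constant $L_{\nabla F_n}=\varpi_1+\varpi_2\mu_n^{-1}$ for some fixed $\varpi_1\ge0$, $\varpi_2>0$. (c) Stepsizes $\gamma_n>0$ satisfy the Armijo-type condition $(F_n+\phi)(\mathrm{prox}_{\gamma_n\phi}(x_n-\gamma_n\nabla F_n(x_n)))\le(F_n+\phi)(x_n)-c\gamma_n(\mathcal{M}_{\gamma_n}^{F_n,\phi}(x_n))^2$, and there are $\beta>0$, $\bar\gamma>0$ with $\beta L_{\nabla F_n}^{-1}\le\gamma_n\le\bar\gamma$ for all $n$. (d) Iterates: $x_{n+1}=\mathrm{prox}_{\gamma_n\phi}(x_n-\gamma_n\nabla F_n(x_n))$. *)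

(* Defs.v *)
From HB Require Import structures.
From mathcomp Require Import all_boot all_order all_algebra.
From mathcomp Require Import all_classical all_reals all_analysis.
Set Implicit Arguments. Unset Strict Implicit. Unset Printing Implicit Defensive.
Import Order.TTheory GRing.Theory Num.Theory.
Import numFieldNormedType.Exports.
Local Open Scope classical_set_scope.
Local Open Scope ring_scope.

(* A finite-dimensional real Hilbert space is modelled (up to isometric
   isomorphism) as 'rV[R]_d with the Euclidean inner product. *)
Section Defs.
Variable R : realType.

Definition dot (d : nat) (u v : 'rV[R]_d) : R := \sum_(i < d) u 0 i * v 0 i.
Definition enorm (d : nat) (u : 'rV[R]_d) : R := Num.sqrt (dot u u).

Definition is_gradient (d : nat) (f : 'rV[R]_d -> R) (G : 'rV[R]_d -> 'rV[R]_d) :=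
  forall x, differentiable f x /\ forall v, 'D_v f x = dot (G x) v.

Definition C1 (d e : nat) (S : 'rV[R]_d -> 'rV[R]_e) :=
  (forall x, differentiable S x) /\ (forall v, continuous (fun x => 'D_v S x)).

Definition convex_fun (d : nat) (f : 'rV[R]_d -> R) :=
  forall x y : 'rV[R]_d, forall t : R, 0 <= t <= 1 ->
    f (t *: x + (1 - t) *: y) <= t * f x + (1 - t) * f y.

Definition grad_lipschitz_on (d e : nat) (A : set 'rV[R]_d) (f : 'rV[R]_d -> 'rV[R]_e) (L : R) :=
  forall x y, A x -> A y -> enorm (f x - f y) <= L * enorm (x - y).

Definition edom (d : nat) (phi : 'rV[R]_d -> \bar R) : set 'rV[R]_d :=
  [set x | phi x \is a fin_num].

Definition proper_fun (d : nat) (phi : 'rV[R]_d -> \bar R) :=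
  (forall x, phi x != -oo%E) /\ (exists x, phi x \is a fin_num).

Definition lsc_fun (d : nat) (phi : 'rV[R]_d -> \bar R) :=
  forall a : R, closed [set x | (phi x <= a%:E)%E].

Definition econvex_fun (d : nat) (phi : 'rV[R]_d -> \bar R) :=
  forall x y : 'rV[R]_d, forall t : R, 0 < t < 1 ->
    (phi ((t *: x + (1 - t) *: y)%R) <= t%:E * phi x + (1 - t)%:E * phi y)%E.

Definition is_prox (d : nat) (phi : 'rV[R]_d -> \bar R) (gamma : R) (xbar p : 'rV[R]_d) :=
  forall x, (phi p + ((2 * gamma)^-1 * enorm (p - xbar) ^+ 2)%:E
             <= phi x + ((2 * gamma)^-1 * enorm (x - xbar) ^+ 2)%:E)%E.

Definition moreau (e : nat) (g : 'rV[R]_e -> R) (mu : R) (zbar : 'rV[R]_e) : R :=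
  inf (range (fun z => g z + (2 * mu)^-1 * enorm (z - zbar) ^+ 2)).

Definition residual (d : nat) (prox : R -> 'rV[R]_d -> 'rV[R]_d)
  (gradF : 'rV[R]_d -> 'rV[R]_d) (gamma : R) (x : 'rV[R]_d) : R :=
  enorm (gamma^-1 *: (x - prox gamma (x - gamma *: gradF x))).

End Defs.

(* Main.v *)
Require Import Defs.
From HB Require Import structures.
From mathcomp Require Import all_boot all_order all_algebra.
From mathcomp Require Import all_classical all_reals all_analysis.
From mathcomp Require Import ring lra.
Import Order.TTheory GRing.Theory Num.Theory.
Set Implicit Arguments. Unset Strict Implicit.
Import numFieldNormedType.Exports.
Local Open Scope classical_set_scope.
Local Open Scope ring_scope.

Section Dot.
Variable R : realType.
Variable d : nat.
Implicit Types u v w : 'rV[R]_d.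

Lemma dotC u v : dot u v = dot v u.
Proof. by apply: eq_bigr => i _; rewrite mulrC. Qed.

Lemma dotDl u v w : dot (u + v) w = dot u w + dot v w.
Proof. by rewrite /dot -big_split; apply: eq_bigr => i _; rewrite mxE mulrDl. Qed.

Lemma dotZl a u v : dot (a *: u) v = a * dot u v.
Proof. by rewrite /dot mulr_sumr; apply: eq_bigr => i _; rewrite mxE mulrA. Qed.

Lemma dotNl u v : dot (- u) v = - dot u v.
Proof. by rewrite -scaleN1r dotZl mulN1r. Qed.

Lemma dotBl u v w : dot (u - v) w = dot u w - dot v w.
Proof. by rewrite dotDl dotNl. Qed.

Lemma dotDr u v w : dot w (u + v) = dot w u + dot w v.
Proof. by rewrite dotC dotDl !(dotC w). Qed.

Lemma dotZr a u v : dot v (a *: u) = a * dot v u.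
Proof. by rewrite dotC dotZl dotC. Qed.

Lemma dotBr u v w : dot w (u - v) = dot w u - dot w v.
Proof. by rewrite dotC dotBl !(dotC w). Qed.

Lemma dot_expand u v t : dot (u + t *: v) (u + t *: v) = dot u u + 2 * t * dot u v + t ^+ 2 * dot v v.
Proof. rewrite !dotDl !dotDr !dotZl !dotZr (dotC v u); ring. Qed.

Lemma dot_aux u w v c : dot (u - c *: w) (u - v) = dot u u - dot u v - c * (dot w u - dot w v).
Proof. by rewrite dotBl dotZl !dotBr. Qed.

Lemma dot_ge0 u : 0 <= dot u u.
Proof. by apply: sumr_ge0 => i _; rewrite -expr2 sqr_ge0. Qed.

Lemma enorm_sq u : enorm u ^+ 2 = dot u u.
Proof. by rewrite /enorm sqr_sqrtr // dot_ge0. Qed.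

Lemma enorm_ge0 u : 0 <= enorm u.
Proof. exact: sqrtr_ge0. Qed.

Lemma enormZ a u : enorm (a *: u) = `|a| * enorm u.
Proof. by rewrite /enorm dotZl dotZr mulrA -expr2 sqrtrM ?sqr_ge0 // sqrtr_sqr. Qed.

Lemma enormN u : enorm (- u) = enorm u.
Proof. by rewrite -scaleN1r enormZ normrN normr1 mul1r. Qed.

Lemma enormB u v : enorm (u - v) = enorm (v - u).
Proof. by rewrite -enormN opprB. Qed.

Lemma enorm0 : enorm (0 : 'rV[R]_d) = 0.
Proof. by rewrite -(scale0r (0 : 'rV[R]_d)) enormZ normr0 mul0r. Qed.

Lemma CS_sq u v : dot u v ^+ 2 <= dot u u * dot v v.
Proof.
have H t : 0 <= dot u u + 2 * t * dot u v + t ^+ 2 * dot v v.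
  have := dot_ge0 (u + t *: v).
  rewrite !dotDl !dotDr !dotZl !dotZr (dotC v u); lra.
have [C0|Cp] := eqVneq (dot v v) 0.
  have B0 : dot u v = 0.
    apply/eqP; apply/negPn/negP => B.
    have := H (- (dot u u + 1) / (2 * dot u v)).
    have -> : 2 * (- (dot u u + 1) / (2 * dot u v)) * dot u v = - (dot u u + 1).
      by field; rewrite B.
    rewrite C0 mulr0 addr0.
    have := dot_ge0 u; lra.
  by rewrite B0 C0 expr0n /= mulr0.
have Cg : 0 < dot v v by rewrite lt_def Cp dot_ge0.
have := H (- dot u v / dot v v).
have -> : dot u u + 2 * (- dot u v / dot v v) * dot u v + (- dot u v / dot v v) ^+ 2 * dot v v
   = (dot u u * dot v v - dot u v ^+ 2) / dot v v.
  by field; rewrite gt_eqF.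
by rewrite pmulr_lge0 ?invr_gt0 // subr_ge0.
Qed.

Lemma CS u v : dot u v <= enorm u * enorm v.
Proof.
rewrite /enorm -sqrtrM ?dot_ge0 //.
apply: le_trans (ler_norm _) _.
by rewrite -sqrtr_sqr ler_sqrt ?mulr_ge0 ?dot_ge0 // CS_sq.
Qed.

End Dot.

Section Lim.
Variable R : realType.
Lemma le_of_small (X Y K : R) : 0 <= K ->
  (forall t, 0 < t < 1 -> X <= Y + t * K) -> X <= Y.
Proof.
move=> K0 H; apply/ler_addgt0Pr => e e0.
pose t := Num.min (2^-1) (e / (K + 1)).
have t0 : 0 < t by rewrite lt_min invr_gt0 ltr0n divr_gt0 //; lra.
have t1 : t < 1 by rewrite gt_min; apply/orP; left; lra.
apply: le_trans (H t _) _; first by rewrite t0 t1.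
rewrite lerD2l.
have : t <= e / (K + 1) by rewrite ge_min lexx orbT.
rewrite ler_pdivlMr; last lra.
move=> h; nra.
Qed.
End Lim.

Section Prox.
Variable R : realType.
Variable d : nat.
Variable phi : 'rV[R]_d -> \bar R.
Hypothesis Pphi : proper_fun phi.
Hypothesis Cphi : econvex_fun phi.

Lemma prox_fin gam z p : is_prox phi gam z p -> phi p \is a fin_num.
Proof.
move=> Hp; case: Pphi => Hn [x0 Hx0].
have := Hp x0; rewrite fin_numE Hn /=.
move: Hx0; case: (phi x0) => // r _.
by case: (phi p).
Qed.

Lemma prox_VI gam z p u : 0 < gam -> is_prox phi gam z p -> phi u \is a fin_num ->
  dot (z - p) (u - p) <= gam * (fine (phi u) - fine (phi p)).
Proof.
move=> g0 Hp Hu.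
have Hpf := @prox_fin gam z p Hp.
set a := fine (phi p); set b := fine (phi u).
pose P := dot (p - z) (p - z); pose Q := dot (p - z) (u - p); pose K := dot (u - p) (u - p).
have K0 : 0 <= K by apply: dot_ge0.
have -> : dot (z - p) (u - p) = - Q by rewrite /Q -dotNl opprB.
apply: (@le_of_small _ _ _ (K / 2)); first lra.
move=> t /andP[t0 t1].
pose pt := t *: u + (1 - t) *: p.
have Hc := @Cphi u p t ltac:(by rewrite t0 t1).

rewrite -(fineK Hu) -(fineK Hpf) -!EFinM -EFinD in Hc.
have Hq : phi pt \is a fin_num.
  rewrite fin_numE; case: Pphi => Hn _; rewrite Hn /=.
  by move: Hc; rewrite /pt; case: (phi _).
have Hpr := Hp pt.
rewrite -(fineK Hq) -(fineK Hpf) -!EFinD lee_fin in Hpr.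
rewrite -(fineK Hq) lee_fin in Hc.
have E : pt - z = (p - z) + t *: (u - p) by apply/rowP => i; rewrite !mxE; ring.
rewrite E !enorm_sq dot_expand -/P -/Q -/K in Hpr.
idtac.
rewrite -/a -/b in Hc Hpr.
idtac.
set q := fine (phi pt) in Hc Hpr.
set ig := (2 * gam)^-1 in Hpr.
have ig2 : ig * (2 * gam) = 1 by rewrite /ig mulVf // mulf_neq0 // ?pnatr_eq0 // gt_eqF.
have H1 : t * a <= t * b + ig * (2 * t * Q + t ^+ 2 * K) by nra.
have g2 : 0 < 2 * gam by rewrite mulr_gt0.
have := H1; rewrite -(ler_pM2l g2) mulrDr (mulrA (2 * gam) ig) (mulrC (2 * gam) ig) ig2 mul1r => H2.
rewrite -(ler_pM2l t0).
have -> : t * - Q = - (t * Q) by ring.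
have -> : t * (gam * (b - a) + t * (K / 2)) = ((2 * gam) * (t * b) + t ^+ 2 * K - (2 * gam) * (t * a)) / 2.
  by field.
rewrite ler_pdivlMr; last lra.
lra.
Qed.

Lemma resid_mono (prox : R -> 'rV[R]_d -> 'rV[R]_d) (gF : 'rV[R]_d -> 'rV[R]_d) g1 g2 x :
  (forall gam xbar, 0 < gam -> is_prox phi gam xbar (prox gam xbar)) ->
  0 < g1 -> g1 <= g2 ->
  residual prox gF g2 x <= residual prox gF g1 x.
Proof.
move=> Hprox g10 g12.
have g20 : 0 < g2 by apply: lt_le_trans g12.
rewrite /residual.
set dd := gF x.
set p1 := prox g1 (x - g1 *: dd); set p2 := prox g2 (x - g2 *: dd).
have Hp1 : is_prox phi g1 (x - g1 *: dd) p1 by apply: Hprox.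
have Hp2 : is_prox phi g2 (x - g2 *: dd) p2 by apply: Hprox.
have F1 := prox_fin Hp1; have F2 := prox_fin Hp2.
have H1 := prox_VI g10 Hp1 F2.
have H2 := prox_VI g20 Hp2 F1.
set a := x - p1 in H1 H2 *; set b := x - p2 in H1 H2 *.
have E1 : x - g1 *: dd - p1 = a - g1 *: dd by apply/rowP => i; rewrite !mxE; ring.
have E2 : x - g2 *: dd - p2 = b - g2 *: dd by apply/rowP => i; rewrite !mxE; ring.
have E3 : p2 - p1 = a - b by apply/rowP => i; rewrite !mxE; ring.
have E4 : p1 - p2 = b - a by apply/rowP => i; rewrite !mxE; ring.
rewrite E1 E3 dot_aux in H1.
rewrite E2 E4 dot_aux in H2.
set f1 := fine (phi p1) in H1 H2; set f2 := fine (phi p2) in H1 H2.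
rewrite (dotC b a) in H2.
set A := dot a a in H1 H2; set B := dot b b in H1 H2; set P := dot a b in H1 H2.
set Da := dot dd a in H1 H2; set Db := dot dd b in H1 H2.
have K : g2 * (A - P) + g1 * (B - P) <= 0.
  have H1' := ler_wpM2l (ltW g20) H1.
  have H2' := ler_wpM2l (ltW g10) H2.
  nra.
have CSab : P <= enorm a * enorm b by apply: CS.
have eA : A = enorm a ^+ 2 by rewrite enorm_sq.
have eB : B = enorm b ^+ 2 by rewrite enorm_sq.
have al0 := enorm_ge0 a; have be0 := enorm_ge0 b.
set al := enorm a in CSab eA al0 *; set be := enorm b in CSab eB be0 *.
have K2 : g2 * al ^+ 2 + g1 * be ^+ 2 <= (g1 + g2) * (al * be).
  rewrite -eA -eB.
  have : (g1 + g2) * P <= (g1 + g2) * (al * be) by rewrite ler_wpM2l // addr_ge0 // ltW.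
  lra.
have gi1 : 0 <= g1^-1 by rewrite invr_ge0 ltW.
have gi2 : 0 <= g2^-1 by rewrite invr_ge0 ltW.
rewrite !enormZ -/al -/be (ger0_norm gi1) (ger0_norm gi2).
rewrite -(ler_pM2l g10) -(ler_pM2l g20).
have -> : g2 * (g1 * (g1^-1 * al)) = g2 * al by rewrite mulVKf // gt_eqF.
have -> : g2 * (g1 * (g2^-1 * be)) = g1 * be by rewrite mulrCA mulVKf // gt_eqF.
rewrite leNgt; apply/negP => L.
have L2 : al < be.
  have : g1 * al <= g2 * al by rewrite ler_wpM2r.
  move=> h; have h2 : g1 * al < g1 * be by lra.
  by rewrite ltr_pM2l in h2.
have : 0 < (be - al) * (g1 * be - g2 * al) by rewrite mulr_gt0 // subr_gt0.
nra.
Qed.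
End Prox.

Section Moreau.
Variable R : realType.
Variable e : nat.
Variable g : 'rV[R]_e -> R.
Variable Lg : R.
Hypothesis Lg0 : 0 < Lg.
Hypothesis Hlip : forall z z', `|g z - g z'| <= Lg * enorm (z - z').

Lemma glow z zb : g zb - Lg * enorm (z - zb) <= g z.
Proof.
have := Hlip zb z; rewrite enormB => h.
have := ler_norm (g zb - g z); lra.
Qed.

Lemma gup z zb : g zb <= g z + Lg * enorm (z - zb).
Proof. have := Hlip zb z; rewrite enormB => h. have := ler_norm (g zb - g z); lra. Qed.

Lemma quad (mu r : R) : 0 < mu -> Lg * r - mu * Lg ^+ 2 / 2 <= (2 * mu)^-1 * r ^+ 2.
Proof.
move=> m0; have m2 : 0 < 2 * mu by rewrite mulr_gt0.
rewrite -(ler_pM2l m2) mulVKf ?gt_eqF //.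
have -> : 2 * mu * (Lg * r - mu * Lg ^+ 2 / 2) = 2 * mu * Lg * r - mu ^+ 2 * Lg ^+ 2 by field.
have := sqr_ge0 (r - mu * Lg); nra.
Qed.

Let f mu zb := fun z => g z + (2 * mu)^-1 * enorm (z - zb) ^+ 2.

Lemma moreau_lbound mu zb : 0 < mu -> lbound (range (f mu zb)) (g zb - mu * Lg ^+ 2 / 2).
Proof.
move=> m0 y [z _ <-]; rewrite /f.
have := glow z zb; have := quad (enorm (z - zb)) m0; lra.
Qed.

Lemma moreau_lb mu zb : 0 < mu -> g zb - mu * Lg ^+ 2 / 2 <= moreau g mu zb.
Proof.
move=> m0; apply: lb_le_inf; first by exists (f mu zb zb), zb.
exact: moreau_lbound.
Qed.

Lemma moreau_le mu zb z : 0 < mu -> moreau g mu zb <= f mu zb z.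
Proof.
move=> m0; apply: (ge_inf); last by exists z.
by exists (g zb - mu * Lg ^+ 2 / 2); apply: moreau_lbound.
Qed.

Lemma moreau_mono mu mu' zb : 0 < mu' -> mu' <= mu ->
  moreau g mu' zb <= moreau g mu zb + 2 * Lg ^+ 2 * mu * (mu - mu') / mu'.
Proof.
move=> m0' mm.
have m0 : 0 < mu by apply: lt_le_trans mm.
set D := 2 * Lg ^+ 2 * mu * (mu - mu') / mu'.
have D0 : 0 <= D.
  rewrite /D divr_ge0 ?(ltW m0') //.
  apply: mulr_ge0; last by rewrite subr_ge0.
  apply: mulr_ge0; last exact: ltW.
  by apply: mulr_ge0 => //; apply: sqr_ge0.
rewrite -lerBlDr; apply: lb_le_inf; first by exists (f mu zb zb), zb.
move=> y [z _ <-]; rewrite lerBlDr /f.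
set r := enorm (z - zb).
have r0 : 0 <= r by apply: enorm_ge0.
have [rs|rl] := leP r (2 * mu * Lg).
  apply: le_trans (moreau_le zb z m0') _; rewrite /f -/r -addrA lerD2l.
  have E1 : (2 * mu')^-1 * r ^+ 2 = (2 * mu)^-1 * r ^+ 2 + r ^+ 2 * ((mu - mu') / (2 * mu * mu')).
    by field; rewrite !gt_eqF.
  have E2 : D = (2 * mu * Lg) ^+ 2 * ((mu - mu') / (2 * mu * mu')).
    by rewrite /D; field; rewrite !gt_eqF.
  rewrite E1 lerD2l E2; apply: ler_wpM2r.
    by rewrite divr_ge0 ?subr_ge0 // mulr_ge0 // ltW // mulr_gt0.
  by rewrite ler_pXn2r // nnegrE // mulr_ge0 // ltW // mulr_gt0.
apply: le_trans (moreau_le zb zb m0') _; rewrite /f subrr enorm0 expr0n /= mulr0 addr0.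
apply: le_trans (gup z zb) _; rewrite -/r -addrA lerD2l.
suff : Lg * r <= (2 * mu)^-1 * r ^+ 2 by lra.
have m2 : 0 < 2 * mu by rewrite mulr_gt0.
rewrite -(ler_pM2l m2) mulVKf ?gt_eqF //.
have := ler_wpM2l r0 (ltW rl); nra.
Qed.
End Moreau.

Theorem theorem2 (R : realType) (dx dz : nat)
  (phi : 'rV[R]_dx -> \bar R) (h : 'rV[R]_dx -> R) (gradh : 'rV[R]_dx -> 'rV[R]_dx)
  (S : 'rV[R]_dx -> 'rV[R]_dz) (g : 'rV[R]_dz -> R) (Lg eta : R)
  (prox : R -> 'rV[R]_dx -> 'rV[R]_dx)
  (mu : nat -> R) (gradF : nat -> 'rV[R]_dx -> 'rV[R]_dx)
  (gamma : nat -> R) (x : nat -> 'rV[R]_dx)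
  (c M varpi1 varpi2 beta gammabar : R) :
  (* standing setup *)
  proper_fun phi -> lsc_fun phi -> econvex_fun phi ->
  is_gradient h gradh ->
  (exists Lh, grad_lipschitz_on (edom phi) gradh Lh) ->
  C1 S ->
  0 < Lg -> (forall z z', `|g z - g z'| <= Lg * enorm (z - z')) ->
  0 < eta -> convex_fun (fun z => g z + eta / 2 * enorm z ^+ 2) ->
  (exists xs, forall y,
      ((h xs + g (S xs))%:E + phi xs <= (h y + g (S y))%:E + phi y)%E) ->
  (* prox is the proximal map of phi *)
  (forall gam xbar, 0 < gam -> is_prox phi gam xbar (prox gam xbar)) ->
  (* algorithm *)
  edom phi (x 1%N) ->
  0 < c < 1 ->
  (* (a) *)
  (forall n, (1 <= n)%N -> 0 < mu n <= (2 * eta)^-1) ->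
  mu @ \oo --> 0 ->
  (forall B : R, exists N, B < \sum_(1 <= k < N) mu k) ->
  1 <= M ->
  (forall n, (1 <= n)%N -> M^-1 <= mu n.+1 / mu n <= 1) ->
  (* (b) gradF n is the gradient of F_n = h + ^{mu_n} g o S, Lipschitz on dom phi *)
  (forall n, (1 <= n)%N ->
     is_gradient (fun y => h y + moreau g (mu n) (S y)) (gradF n)) ->
  0 <= varpi1 -> 0 < varpi2 ->
  (forall n, (1 <= n)%N ->
     grad_lipschitz_on (edom phi) (gradF n) (varpi1 + varpi2 / mu n)) ->
  (* (c) *)
  (forall n, (1 <= n)%N ->
     ((h (prox (gamma n) ((x n - gamma n *: gradF n (x n))%R))
        + moreau g (mu n) (S (prox (gamma n) ((x n - gamma n *: gradF n (x n))%R))))%:E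
      + phi (prox (gamma n) ((x n - gamma n *: gradF n (x n))%R))
      <= (h (x n) + moreau g (mu n) (S (x n)))%:E + phi (x n)
         - (c * gamma n * residual prox (gradF n) (gamma n) (x n) ^+ 2)%:E)%E) ->
  0 < beta -> 0 < gammabar ->
  (forall n, (1 <= n)%N -> 0 < gamma n /\
     beta / (varpi1 + varpi2 / mu n) <= gamma n <= gammabar) ->
  (* (d) *)
  (forall n, (1 <= n)%N -> x n.+1 = prox (gamma n) ((x n - gamma n *: gradF n (x n))%R)) ->
  exists chi : R, 0 < chi /\
    forall kl ku : nat, (1 <= kl)%N -> (kl <= ku)%N ->
      \big[Num.min/residual prox (gradF kl) gammabar (x kl)]_(kl <= n < ku.+1)
          residual prox (gradF n) gammabar (x n)
      <= Num.sqrt (chi / \sum_(kl <= n < ku.+1) mu n).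
Proof.
move=> Pphi Lphi Cphi Gh Lh CSS Lg0 Hlip eta0 Cg [xs Hxs] Hprox Hx1 c01 Hmu mu0 Hsum M1 Hratio
  HgF w1 w2 HLF Hdesc beta0 gb0 Hgam Hx.
have /andP[c0 c1] := c01.
have M0 : 0 < M by apply: lt_le_trans M1.
have fin : forall n, (1 <= n)%N -> phi (x n) \is a fin_num.
  case=> [//|n] _; elim: n => [|n IH]; first exact: Hx1.
  rewrite Hx //; apply: (prox_fin Pphi); apply: Hprox; by case: (Hgam n.+1 isT).
have mup : forall n, (1 <= n)%N -> 0 < mu n by move=> n /Hmu /andP[].
pose a n := fine (phi (x n)).
pose V n := h (x n) + moreau g (mu n) (S (x n)) + a n.
pose r n := residual prox (gradF n) (gamma n) (x n).
pose T n := c * gamma n * r n ^+ 2.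
pose K1 := 2 * Lg ^+ 2 * M.
pose W n := V n + K1 * mu n.
have desc : forall n, (1 <= n)%N ->
    h (x n.+1) + moreau g (mu n) (S (x n.+1)) + a n.+1 <= V n - T n.
  move=> n n1; have := Hdesc n n1; rewrite -Hx //.
  rewrite -(fineK (fin n.+1 isT)) -(fineK (fin n n1)).
  by rewrite -!EFinD lee_fin.
have monoM : forall n z, (1 <= n)%N ->
    moreau g (mu n.+1) z <= moreau g (mu n) z + K1 * (mu n - mu n.+1).
  move=> n z n1.
  have m0 := mup n n1; have m1 := mup n.+1 isT.
  have /andP[Hr1 Hr2] := Hratio n n1.
  have le1 : mu n.+1 <= mu n by rewrite ler_pdivrMr // mul1r in Hr2.
  have le2 : mu n <= M * mu n.+1.
    rewrite ler_pdivlMr // in Hr1.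
    have : M * (M^-1 * mu n) <= M * mu n.+1 by rewrite ler_pM2l.
    by rewrite mulVKf // gt_eqF.
  apply: le_trans (moreau_mono Lg0 Hlip z m1 le1) _; rewrite lerD2l.
  have -> : 2 * Lg ^+ 2 * mu n * (mu n - mu n.+1) / mu n.+1
          = 2 * Lg ^+ 2 * (mu n - mu n.+1) * (mu n / mu n.+1).
    by field; rewrite gt_eqF.
  have -> : K1 * (mu n - mu n.+1) = 2 * Lg ^+ 2 * (mu n - mu n.+1) * M by rewrite /K1; ring.
  apply: ler_wpM2l; first by apply: mulr_ge0; [apply: mulr_ge0 => //; apply: sqr_ge0 | rewrite subr_ge0].
  by rewrite ler_pdivrMr.
have stepW : forall n, (1 <= n)%N -> W n.+1 <= W n - T n.
  move=> n n1; have := desc n n1; have := monoM n (S (x n.+1)) n1.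
  rewrite /W /V; lra.
have tele : forall m, \sum_(1 <= n < m.+1) T n + W m.+1 <= W 1%N.
  elim=> [|m IH]; first by rewrite big_geq // add0r.
  rewrite big_nat_recr //=.
  have := stepW m.+1 isT; lra.
have finxs : phi xs \is a fin_num.
  have := Hxs (x 1%N); rewrite -(fineK (fin 1%N isT)).
  rewrite fin_numE; case: Pphi => Hn _; rewrite Hn /=.
  by case: (phi xs).
pose Fmin := h xs + g (S xs) + fine (phi xs).
pose Lb := Fmin - (2 * eta)^-1 * Lg ^+ 2 / 2.
have lowW : forall n, (1 <= n)%N -> Lb <= W n.
  move=> n n1.
  have := Hxs (x n); rewrite -(fineK finxs) -(fineK (fin n n1)) -!EFinD lee_fin => H1.
  have H2 := moreau_lb Hlip (S (x n)) (mup n n1).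
  have /andP[_ H3] := Hmu n n1.
  have H4 : mu n * Lg ^+ 2 / 2 <= (2 * eta)^-1 * Lg ^+ 2 / 2.
    have := sqr_ge0 Lg; nra.
  have H5 : 0 <= K1 * mu n.
    rewrite /K1; apply: mulr_ge0; [apply: mulr_ge0; [apply: mulr_ge0 => //; apply: sqr_ge0 | exact: ltW M0] | exact: ltW (mup n n1)].
  rewrite /W /V /a /Lb /Fmin; lra.
pose B := W 1%N - Lb.
have Tge0 : forall n, (1 <= n)%N -> 0 <= T n.
  move=> n n1; have [g0 _] := Hgam n n1.
  by rewrite /T mulr_ge0 // ?sqr_ge0 // mulr_ge0 // ltW.
have sumT : forall kl ku, (1 <= kl)%N -> (kl <= ku)%N -> \sum_(kl <= n < ku.+1) T n <= B.
  move=> kl ku k1 kk.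
  have := tele ku; have := lowW ku.+1 isT.
  have -> : \sum_(1 <= n < ku.+1) T n = \sum_(1 <= n < kl) T n + \sum_(kl <= n < ku.+1) T n.
    by rewrite -big_cat_nat //; apply: leqW.
  have : 0 <= \sum_(1 <= n < kl) T n.
    rewrite big_nat_cond; apply: sumr_ge0 => i /andP[/andP[Hi _] _]; exact: Tge0.
  rewrite /B; lra.
have B0 : 0 <= B by rewrite /B subr_ge0; apply: lowW.
pose Z := varpi1 * (2 * eta)^-1 + varpi2.
have Z0 : 0 < Z.
  have e2 : 0 <= (2 * eta)^-1 by rewrite invr_ge0; apply: mulr_ge0 => //; apply: ltW.
  have : 0 <= varpi1 * (2 * eta)^-1 by apply: mulr_ge0.
  rewrite /Z; lra.
pose Kc := Z / beta / c.
have Kc0 : 0 <= Kc.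
  rewrite /Kc; apply: divr_ge0; last exact: ltW c0.
  by apply: divr_ge0; [exact: ltW Z0 | exact: ltW beta0].
pose rb n := residual prox (gradF n) gammabar (x n).
have term : forall n, (1 <= n)%N -> mu n * rb n ^+ 2 <= Kc * T n.
  move=> n n1.
  have [g0 /andP[gl gu]] := Hgam n n1.
  have m0 := mup n n1.
  have /andP[_ H3] := Hmu n n1.
  have Y0 : 0 < varpi1 + varpi2 / mu n by apply: ltr_wpDl => //; rewrite divr_gt0.
  rewrite ler_pdivrMr // in gl.
  have h1 : mu n * beta <= mu n * (gamma n * (varpi1 + varpi2 / mu n)) by rewrite ler_pM2l.
  have e1 : mu n * (gamma n * (varpi1 + varpi2 / mu n)) = gamma n * (varpi1 * mu n + varpi2).
    by field; rewrite gt_eqF.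
  have h2 : varpi1 * mu n <= varpi1 * (2 * eta)^-1 by rewrite ler_wpM2l.
  have h3 : gamma n * (varpi1 * mu n + varpi2) <= gamma n * Z.
    by rewrite ler_pM2l // /Z lerD2r.
  have muZ : mu n <= gamma n * Z / beta.
    rewrite ler_pdivlMr //; lra.
  have rr : rb n <= r n := resid_mono Pphi Cphi (gradF n) (x n) Hprox g0 gu.
  have rb0 : 0 <= rb n by apply: enorm_ge0.
  have rr2 : rb n ^+ 2 <= r n ^+ 2 by rewrite !expr2; apply: ler_pM.
  have -> : Kc * T n = gamma n * Z / beta * r n ^+ 2 by rewrite /Kc /T; field; rewrite !gt_eqF.
  apply: (le_trans (ler_wpM2l (ltW m0) rr2)).
  by apply: ler_wpM2r => //; apply: sqr_ge0.
exists (Kc * B + 1); split.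
  by apply: ltr_wpDl => //; apply: mulr_ge0.
move=> kl ku k1 kk.
set m := \big[_/_]_(kl <= n < ku.+1) _.
have [mle|mgt] := leP m 0.
  by apply: le_trans mle _; apply: sqrtr_ge0.
have Sp : 0 < \sum_(kl <= n < ku.+1) mu n.
  rewrite big_ltn //.
  have : 0 <= \sum_(kl.+1 <= n < ku.+1) mu n.
    rewrite big_nat_cond; apply: sumr_ge0 => i /andP[/andP[Hi _] _].
    apply: ltW; apply: mup; exact: leq_trans k1 (ltnW Hi).
  have := mup kl k1; lra.
have key : m ^+ 2 * \sum_(kl <= n < ku.+1) mu n <= Kc * B.
  rewrite mulr_sumr.
  apply: (@le_trans _ _ (\sum_(kl <= n < ku.+1) Kc * T n)); last first.
    by rewrite -mulr_sumr; apply: ler_wpM2l => //; apply: sumT.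
  rewrite big_nat_cond [X in _ <= X]big_nat_cond; apply: ler_sum => i /andP[/andP[Hi1 Hi2] _].
  have i1 : (1 <= i)%N by apply: leq_trans Hi1.
  apply: le_trans (term i i1); rewrite mulrC; apply: ler_wpM2l; first exact: ltW (mup i i1).
  have mi : m <= rb i.
    by apply: ge_bigmin_seq => //; rewrite mem_index_iota Hi1 Hi2.
  by rewrite !expr2; apply: ler_pM => //; apply: ltW.
have KB : 0 <= Kc * B by apply: mulr_ge0.
have chi0 : 0 <= (Kc * B + 1) / \sum_(kl <= n < ku.+1) mu n.
  apply: divr_ge0; [lra | exact: ltW Sp].
rewrite -(ger0_norm (ltW mgt)) -sqrtr_sqr ler_sqrt //.
rewrite ler_pdivlMr //; lra.
Qed.
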